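(* Let $L,n$ be positive integers and $B\in\mathcal M(L,n)$. Then for all $1\le i\le L-1$ and $1\le j\le n-1$, \[e_i^{\downarrow}(e_j^{\leftarrow}(B))=e_j^{\leftarrow}(e_i^{\downarrow}(B)).\]
   Context: $\mathcal M(L,n)$ is the set of tuples $B=(B_1,\dots,B_L)$ of subsets of $[n]$, viewed as $L\times n$ grids with rows $1..L$ bottom to top and columns $1..n$ left to right, a ball in $(r,j)$ iff $j\in B_r$. $\mathrm{cw}(B)$ scans columns left to right, each top to bottom, recording row numbers of balls. For a word $w$ and $i\ge1$, $\mathrm{Par}_i(w)$ writes ''('' for each letter $i+1$ and '')'' for each letter $i$, left to right, and iteratively matches a ''('' with a '')'' to its right when adjacent or separated only by matched parentheses. $e_i^\star(B)$ moves every ball of row $i+1$ whose letter in $\mathrm{cw}(B)$ is unmatched in $\mathrm{Par}_i(\mathrm{cw}(B))$ down to row $i$ in the same column. The rotation $\mathrm{rot}:\mathcal M(L,n)\to\mathcal M(n,L)$ is the $90^\circ$ counterclockwise rotation: the ball in cell $(r,c)$ (row $r$, column $c$) goes to cell $(c,L+1-r)$. Define $e_i^{\downarrow}=e_i^\star$ on $\mathcal M(L,n)$ and $e_j^{\leftarrow}=\mathrm{rot}^{-1}\circ e_j^\star\circ\mathrm{rot}$ (with $e_j^\star$ acting on $\mathcal M(n,L)$). *)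

(* Defs.v *)
From mathcomp Require Import all_boot all_order.
Set Implicit Arguments. Unset Strict Implicit. Unset Printing Implicit Defensive.

(* A grid B in M(L,n): row r (paper row r, 1 <= r <= L) is the ordinal r-1 : 'I_L,
   column c (paper column c, 1 <= c <= n) is the ordinal c-1 : 'I_n.
   B r is the set of columns containing a ball in that row. *)
Definition grid (L n : nat) := {ffun 'I_L -> {set 'I_n}}.

(* column reading word cw(B), recorded as the list of ball cells (row, column):
   columns left to right, each column top to bottom. The letter of a cell
   (r, c) is the paper row number val r + 1. *)
Definition cw (L n : nat) (B : grid L n) : seq ('I_L * 'I_n) :=
  flatten [seq [seq (r, c) | r <- rev (enum 'I_L) & c \in B r] | c <- enum 'I_n].

(* Bracketing Par_i (paper index i >= 1): a letter i+1 (ordinal row i) is "(",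
   a letter i (ordinal row i-1) is ")". Scanning left to right, each ")"
   matches the nearest preceding still-unmatched "(" (this is exactly the
   iterative matching of adjacent pairs).  [unm i s stk] returns the cells of
   the unmatched "(" letters (stk = currently unmatched "(" cells). *)
Fixpoint unm (L n : nat) (i : nat) (s stk : seq ('I_L * 'I_n)) : seq ('I_L * 'I_n) :=
  match s with
  | [::] => stk
  | x :: s' =>
      if val x.1 == i then unm i s' (x :: stk)
      else if val x.1 == i.-1 then unm i s' (behead stk)
      else unm i s' stk
  end.

Definition estar (L n : nat) (i : nat) (B : grid L n) : grid L n :=
  let U := unm i (cw B) [::] in
  let moved := [set c : 'I_n | has (fun x => x.2 == c) U] in
  [ffun r : 'I_L =>
     if val r == i.-1 then B r :|: moved
     else if val r == i then B r :\: moved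
     else B r].

(* rotation by 90 degrees counterclockwise: the ball in cell (r,c) (paper,
   1-indexed) goes to cell (c, L+1-r); 0-indexed: (r,c) |-> (c, rev_ord r). *)
Definition rot (L n : nat) (B : grid L n) : grid n L :=
  [ffun c : 'I_n => [set r' : 'I_L | c \in B (rev_ord r')]].

Definition rotinv (L n : nat) (C : grid n L) : grid L n :=
  [ffun r : 'I_L => [set c : 'I_n | rev_ord r \in C c]].

Definition edown (L n : nat) (i : nat) (B : grid L n) : grid L n := estar i B.
Definition eleft (L n : nat) (j : nat) (B : grid L n) : grid L n :=
  rotinv (estar j (rot B)).

(* Main.v *)
Require Import Defs.
From mathcomp Require Import all_boot all_order.
From mathcomp Require Import zify.
Set Implicit Arguments. Unset Strict Implicit. Unset Printing Implicit Defensive.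


Definition step {T : eqType} (lt : T -> option bool) (stk : seq T) (x : T) : seq T :=
  match lt x with Some true => x :: stk | Some false => behead stk | None => stk end.
Definition bfold {T : eqType} (lt : T -> option bool) (s : seq T) stk := foldl (step lt) stk s.
Fixpoint kc {T : eqType} (lt : T -> option bool) (s : seq T) : nat :=
  match s with [::] => 0 | x :: s' =>
    match lt x with Some true => (kc lt s').-1 | Some false => (kc lt s').+1 | None => kc lt s' end end.

Lemma bfold_cons {T : eqType} (lt : T -> option bool) x s stk : bfold lt (x :: s) stk = bfold lt s (step lt stk x).
Proof. by []. Qed.

Lemma bfold_cat {T : eqType} (lt : T -> option bool) s1 s2 stk : bfold lt (s1 ++ s2) stk = bfold lt s2 (bfold lt s1 stk).
Proof. exact: foldl_cat. Qed.

Lemma bfold_drop {T : eqType} (lt : T -> option bool) s stk : bfold lt s stk = bfold lt s [::] ++ drop (kc lt s) stk.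
Proof.
elim: s stk => [|x s IH] stk; first by rewrite drop0.
rewrite !bfold_cons [kc _ (_ :: _)]/= /step; case: (lt x) => [[]|].
- rewrite IH [bfold lt s [:: x]]IH -catA; congr (_ ++ _).
  by case: (kc lt s) => [|k] //=; rewrite drop0.
- rewrite IH; case: stk => [|y stk] //=; by rewrite ?drop_nil.
- by rewrite IH.
Qed.

Lemma bfold_sub {T : eqType} (lt : T -> option bool) s stk x : x \in bfold lt s stk -> (x \in s) || (x \in stk).
Proof.
elim: s stk => [|y s IH] stk; first by move=> ->; rewrite orbT.
rewrite bfold_cons => /IH /orP[xs|xst]; first by rewrite inE xs !orbT.
move: xst; rewrite /step; case: (lt y) => [[]|] /=.
- rewrite inE => /orP[/eqP->|->]; by rewrite ?inE ?eqxx ?orbT.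
- case: stk => //= z stk xs; by rewrite !inE xs !orbT.
- by move=> ->; rewrite orbT.
Qed.

Lemma bfold_eq {T : eqType} (lt lt' : T -> option bool) s stk : {in s, lt =1 lt'} -> bfold lt s stk = bfold lt' s stk.
Proof.
elim: s stk => [|y s IH] stk // H.
rewrite !bfold_cons /step H ?mem_head //; apply: IH => z zs; apply: H; by rewrite inE zs orbT.
Qed.

Lemma kc_eq {T : eqType} (lt lt' : T -> option bool) s : {in s, lt =1 lt'} -> kc lt s = kc lt' s.
Proof.
elim: s => [|y s IH] //= H.
rewrite H ?mem_head // IH // => z zs; apply: H; by rewrite inE zs orbT.
Qed.

Definition mfold (x y : option bool) : seq bool :=
  let s1 := if x is Some true then [:: false] else [::] in
  match y with Some true => true :: s1 | Some false => behead s1 | None => s1 end.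
Definition mkc (x y : option bool) : nat :=
  let k := match y with Some false => 1 | _ => 0 end in
  match x with Some true => k.-1 | Some false => k.+1 | None => k end.

Lemma bfold_mid {T : eqType} (lt : T -> option bool) k k' :
  bfold lt [:: k; k'] [::] = map (fun z => if z then k' else k) (mfold (lt k) (lt k')).
Proof. by rewrite /bfold /= /step; case: (lt k) => [[]|]; case: (lt k') => [[]|]. Qed.

Lemma kc_mid {T : eqType} (lt : T -> option bool) k k' : kc lt [:: k; k'] = mkc (lt k) (lt k').
Proof. by rewrite /=; case: (lt k) => [[]|]; case: (lt k') => [[]|]. Qed.

Lemma mem_drop_cat1 {T : eqType} (c : T) t W Z : c \notin W ->
  (c \in drop t (W ++ Z)) = (c \in drop (t - size W) Z).
Proof.
move=> cW; rewrite drop_cat; case: ltnP => h.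
  rewrite mem_cat (negPf (contra (@mem_drop _ _ _ _) cW)) /=.
  have -> : t - size W = 0 by lia.
  by rewrite drop0.
by [].
Qed.

Lemma mem_drop_cat2 {T : eqType} (c : T) t W Z : c \notin Z ->
  (c \in drop t (W ++ Z)) = (c \in drop t W).
Proof.
move=> cZ; rewrite drop_cat; case: ltnP => h.
  by rewrite mem_cat (negPf cZ) orbF.
by rewrite (negPf (contra (@mem_drop _ _ _ _) cZ)) drop_oversize.
Qed.

Definition msh x y t := t - size (mfold x y) + mkc x y.

Lemma mem_bfold_out {T : eqType} (lt : T -> option bool) pre k k' suf c : c \notin [:: k; k'] ->
  (c \in bfold lt (pre ++ [:: k; k'] ++ suf) [::]) =
  (c \in bfold lt suf [::]) ||
  (c \in drop (msh (lt k) (lt k') (kc lt suf)) (bfold lt pre [::])).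
Proof.
move=> cm; rewrite !bfold_cat [bfold lt suf _]bfold_drop mem_cat; congr orb.
rewrite [bfold lt [:: k; k'] _]bfold_drop mem_drop_cat1.
  by rewrite drop_drop bfold_mid size_map kc_mid.
by apply: contra cm => /bfold_sub; rewrite orbF.
Qed.

Lemma mem_bfold_mid {T : eqType} (lt : T -> option bool) pre k k' suf (c : T) (z : bool) : k != k' ->
  c = (if z then k' else k) -> c \notin pre -> c \notin suf ->
  (c \in bfold lt (pre ++ [:: k; k'] ++ suf) [::]) =
  (z \in drop (kc lt suf) (mfold (lt k) (lt k'))).
Proof.
move=> kk' -> cp cs; rewrite !bfold_cat [bfold lt suf _]bfold_drop mem_cat.
have -> : ((if z then k' else k) \in bfold lt suf [::]) = false.
  by apply/negP => /bfold_sub; rewrite orbF (negPf cs).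
rewrite orFb [bfold lt [:: k; k'] (bfold _ _ _)]bfold_drop mem_drop_cat2; last first.
  by apply/negP => /mem_drop /bfold_sub; rewrite orbF (negPf cp).
rewrite bfold_mid -map_drop mem_map //.
by case=> [] [] //= /eqP; rewrite ?(negPf kk') // eq_sym (negPf kk').
Qed.


Lemma unm_cat L n i (s1 s2 stk : seq ('I_L * 'I_n)) :
  unm i (s1 ++ s2) stk = unm i s2 (unm i s1 stk).
Proof. by elim: s1 stk => [|x s1 IH] stk //=; case: ifP => _; [|case: ifP => _]; rewrite IH. Qed.

Lemma unm_filter L n i (s stk : seq ('I_L * 'I_n)) :
  unm i s stk = unm i [seq x <- s | (val x.1 == i) || (val x.1 == i.-1)] stk.
Proof.
elim: s stk => [|x s IH] stk //=.
by case: ifP => h1 /=; [rewrite h1 | case: ifP => h2 /=; rewrite ?h1 ?h2].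
Qed.

Lemma filter_ab L i (a b : 'I_L) : val a = i.-1 -> val b = i -> 0 < i ->
  [seq r <- enum 'I_L | (val r == i) || (val r == i.-1)] = [:: a; b].
Proof.
move=> va vb i0; apply: (inj_map val_inj).
rewrite -(filter_map val (fun m : nat => (m == i) || (m == i.-1))) val_enum_ord /= va vb.
have bL := ltn_ord b; rewrite vb in bL.
have -> : iota 0 L = iota 0 i.-1 ++ iota i.-1 (2 + (L - i.+1)).
  by rewrite -iotaD; congr iota; lia.
rewrite /= filter_cat.
rewrite (@eq_in_filter _ _ pred0); last first.
  by move=> x; rewrite mem_iota => /andP[_ h] /=; apply/negbTE; lia.
rewrite filter_pred0 /=.
have -> : (i.-1 == i) = false by lia.
rewrite eqxx /= prednK // eqxx /=.
rewrite (@eq_in_filter _ _ pred0); last first.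
  by move=> x; rewrite mem_iota => /andP[h _] /=; apply/negbTE; lia.
by rewrite filter_pred0.
Qed.

Definition ltb (lo up : bool) : option bool :=
  if up && ~~ lo then Some true else if lo && ~~ up then Some false else None.
Definition ltr2 (T : finType) (Ua Ub : {set T}) (c : T) := ltb (c \in Ua) (c \in Ub).

Lemma unm_col L n (G : grid L n) i (a b : 'I_L) (c : 'I_n) stk :
  val a = i.-1 -> val b = i -> 0 < i ->
  map snd (unm i [seq (r, c) | r <- rev (enum 'I_L) & c \in G r] stk) =
  step (ltr2 (G a) (G b)) (map snd stk) c.
Proof.
move=> va vb i0; rewrite unm_filter filter_map -filter_predI.
rewrite (@eq_filter _ _ (predI (fun r => c \in G r) (fun r : 'I_L => (val r == i) || (val r == i.-1)))); last first.
  by move=> r /=; rewrite andbC.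
rewrite filter_predI filter_rev (filter_ab va vb i0) /=.
have hb : (val b == i.-1) = false by rewrite vb; lia.
have ha : (val a == i) = false by rewrite va; lia.
rewrite /step /ltr2 /ltb.
have hi : (i.-1 == i) = false by lia.
case: (c \in G b); case: (c \in G a) => /=; rewrite ?vb ?va ?eqxx ?hb ?ha ?hi //=;
  by case: stk.
Qed.

Lemma unm_bfold L n (G : grid L n) i (a b : 'I_L) :
  val a = i.-1 -> val b = i -> 0 < i ->
  map snd (unm i (cw G) [::]) = bfold (ltr2 (G a) (G b)) (enum 'I_n) [::].
Proof.
move=> va vb i0; rewrite /cw.
have gen : forall s (stk : seq ('I_L * 'I_n)),
  map snd (unm i (flatten [seq [seq (r, c) | r <- rev (enum 'I_L) & c \in G r] | c <- s]) stk)
  = bfold (ltr2 (G a) (G b)) s (map snd stk).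
  elim=> [|c s IH] stk //.
  rewrite [flatten _]/= unm_cat IH; congr bfold; exact: unm_col.
exact: gen.
Qed.

Lemma estarE L n (G : grid L n) i (a b : 'I_L) :
  val a = i.-1 -> val b = i -> 0 < i ->
  estar i G = [ffun r => if r == a then G r :|: [set c | c \in bfold (ltr2 (G a) (G b)) (enum 'I_n) [::]]
                         else if r == b then G r :\: [set c | c \in bfold (ltr2 (G a) (G b)) (enum 'I_n) [::]]
                         else G r].
Proof.
move=> va vb i0; rewrite /estar; apply/ffunP => r; rewrite !ffunE.
have -> : [set c | has (fun x => x.2 == c) (unm i (cw G) [::])] =
          [set c | c \in bfold (ltr2 (G a) (G b)) (enum 'I_n) [::]].
  apply/setP => c; rewrite !inE -(unm_bfold G va vb i0) -has_pred1 has_map.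
  by apply: eq_has => x /=; rewrite eq_sym.
by rewrite -va -vb.
Qed.

Definition fl1 x y t := false \in drop t (mfold x y).
Definition fl2 x y t := true \in drop t (mfold x y).

Lemma finite p q s u t t' :
  let Nb := fl1 (ltb p q) (ltb s u) t' in let Na := fl2 (ltb p q) (ltb s u) t' in
  let fl := fl1 (ltb s p) (ltb u q) t in let fr := fl2 (ltb s p) (ltb u q) t in
  let xl := ltb (s || Na) (p || Nb) in let xr := ltb (u && ~~Na) (q && ~~Nb) in
  let yb := ltb (p && ~~fl) (q && ~~fr) in let ya := ltb (s || fl) (u || fr) in
  msh xl xr t = msh (ltb s p) (ltb u q) t /\ msh yb ya t' = msh (ltb p q) (ltb s u) t' /\
   (p || Nb) && ~~ fl1 xl xr t = (p && ~~fl) || fl1 yb ya t' /\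
   (q && ~~Nb) && ~~ fl2 xl xr t = (q && ~~fr) && ~~ fl1 yb ya t' /\
   (s || Na) || fl1 xl xr t = (s || fl) || fl2 yb ya t' /\
   (u && ~~Na) || fl2 xl xr t = (u || fr) && ~~ fl2 yb ya t'.
Proof.
rewrite /fl1 /fl2 /msh.
by case: p; case: q; case: s; case: u; case: t => [|[|t]]; case: t' => [|[|t']];
  rewrite /=; (repeat split) => //=; lia.
Qed.

Lemma enum_split m (K K' : 'I_m) : val K' = (val K).+1 ->
  exists pre suf, enum 'I_m = pre ++ [:: K; K'] ++ suf /\
    [/\ K \notin pre, K \notin suf, K' \notin pre & K' \notin suf].
Proof.
move=> vK.
have hs : size (enum 'I_m) = m by rewrite size_enum_ord.
have e : enum 'I_m = take K (enum 'I_m) ++ [:: K; K'] ++ drop K'.+1 (enum 'I_m).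
  rewrite -{1}(cat_take_drop K (enum 'I_m)); congr (_ ++ _).
  rewrite (drop_nth K) ?hs ?ltn_ord // nth_ord_enum /=.
  have -> : (nat_of_ord K).+1 = K' by rewrite vK.
  rewrite (drop_nth K') ?hs ?ltn_ord // nth_ord_enum.
  by [].
exists (take K (enum 'I_m)), (drop K'.+1 (enum 'I_m)); split => //.
have := enum_uniq 'I_m; rewrite {1}e cat_uniq => /and3P[_ h1 h2].
move: h2; rewrite /= !inE !negb_or => /andP[/andP[_ k1] /andP[k2 _]].
move: h1; rewrite /= !negb_or => /andP[k3 /andP[k4 _]].
by split.
Qed.

Lemma edownE L n (G : grid L n) i (a b : 'I_L) :
  val a = i.-1 -> val b = i -> 0 < i -> forall r c,
  (c \in edown i G r) = if r == a then (c \in G r) || (c \in bfold (ltr2 (G a) (G b)) (enum 'I_n) [::])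
    else if r == b then (c \in G r) && (c \notin bfold (ltr2 (G a) (G b)) (enum 'I_n) [::])
    else c \in G r.
Proof.
move=> va vb i0 r c; rewrite /edown (estarE G va vb i0) ffunE.
by case: eqP => _; [|case: eqP => _]; rewrite ?inE // andbC.
Qed.

Lemma eleftE L n (B : grid L n) j (l rc : 'I_n) :
  val l = j.-1 -> val rc = j -> 0 < j -> forall r c,
  (c \in eleft j B r) = if c == l then (c \in B r) || (rev_ord r \in bfold (ltr2 (Defs.rot B l) (Defs.rot B rc)) (enum 'I_L) [::])
    else if c == rc then (c \in B r) && (rev_ord r \notin bfold (ltr2 (Defs.rot B l) (Defs.rot B rc)) (enum 'I_L) [::])
    else c \in B r.
Proof.
move=> vl vr j0 r c; rewrite /eleft (estarE (Defs.rot B) vl vr j0) /rotinv !ffunE inE ffunE.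
by case: eqP => [->|_]; [|case: eqP => [->|_]]; rewrite ?inE /Defs.rot ffunE inE rev_ordK // andbC.
Qed.

Unset Implicit Arguments. Set Strict Implicit. Set Printing Implicit Defensive.

Theorem lemma5p7 (L n : nat) (hL : 0 < L) (hn : 0 < n) (B : grid L n) (i j : nat) :
  1 <= i <= L - 1 -> 1 <= j <= n - 1 ->
  edown i (eleft j B) = eleft j (edown i B).
Proof.
move=> /andP[i1 iL] /andP[j1 jn].
have ha : i.-1 < L by lia. have hb : i < L by lia.
have hl : j.-1 < n by lia. have hr : j < n by lia.
have i0 : 0 < i by lia. have j0 : 0 < j by lia.
pose a := Ordinal ha; pose b := Ordinal hb; pose l := Ordinal hl; pose rc := Ordinal hr.
have va : val a = i.-1 by []. have vb : val b = i by [].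
have vl : val l = j.-1 by []. have vr : val rc = j by [].
have ab : a != b by apply/eqP => /(congr1 val) /=; lia.
have lr : l != rc by apply/eqP => /(congr1 val) /=; lia.
have rab : rev_ord b != rev_ord a by apply/eqP => /(congr1 val) /=; lia.
have [preX [sufX [eX [lpX lsX rpX rsX]]]] := @enum_split n l rc ltac:(rewrite /= ; lia).
have [preY [sufY [eY [bpY bsY apY asY]]]] := @enum_split L (rev_ord b) (rev_ord a) ltac:(rewrite /= ; lia).
set E := eleft j B. set D := edown i B.
have hE := eleftE B vl vr j0. have hD := edownE B va vb i0.
have hE2 := edownE E va vb i0. have hD2 := eleftE D vl vr j0.
set MXB := bfold (ltr2 (B a) (B b)) _ _ in hD.
set MXE := bfold (ltr2 (E a) (E b)) _ _ in hE2.
set MYB := bfold (ltr2 (Defs.rot B l) (Defs.rot B rc)) _ _ in hE.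
set MYD := bfold (ltr2 (Defs.rot D l) (Defs.rot D rc)) _ _ in hD2.
have nX : forall c, c \in preX ++ sufX -> (c != l) && (c != rc).
  by move=> c; rewrite mem_cat => /orP[] h; apply/andP; split; apply: contraTneq h => ->.
have nY : forall r, r \in preY ++ sufY -> (r != rev_ord b) && (r != rev_ord a).
  by move=> c; rewrite mem_cat => /orP[] h; apply/andP; split; apply: contraTneq h => ->.
have agX : {in preX ++ sufX, ltr2 (E a) (E b) =1 ltr2 (B a) (B b)}.
  move=> c /nX /andP[cl cr]; by rewrite /ltr2 !hE ?(negPf cl) ?(negPf cr).
have agY : {in preY ++ sufY, ltr2 (Defs.rot D l) (Defs.rot D rc) =1 ltr2 (Defs.rot B l) (Defs.rot B rc)}.
  move=> r /nY /andP[rb ra]; rewrite /ltr2 /Defs.rot !ffunE !inE !hD.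
  have -> : (rev_ord r == a) = false by apply/negbTE; apply: contraNneq ra => <-; rewrite rev_ordK.
  have -> : (rev_ord r == b) = false by apply/negbTE; apply: contraNneq rb => <-; rewrite rev_ordK.
  by [].
have ba : (b == a) = false by apply/negbTE; rewrite eq_sym.
have rl : (rc == l) = false by apply/negbTE; rewrite eq_sym.
have tXe : kc (ltr2 (E a) (E b)) sufX = kc (ltr2 (B a) (B b)) sufX.
  by apply: kc_eq => c cs; apply: agX; rewrite mem_cat cs orbT.
have tYe : kc (ltr2 (Defs.rot D l) (Defs.rot D rc)) sufY = kc (ltr2 (Defs.rot B l) (Defs.rot B rc)) sufY.
  by apply: kc_eq => c cs; apply: agY; rewrite mem_cat cs orbT.
set tX := kc (ltr2 (B a) (B b)) sufX.
set tY := kc (ltr2 (Defs.rot B l) (Defs.rot B rc)) sufY.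
have YBb : ltr2 (Defs.rot B l) (Defs.rot B rc) (rev_ord b) = ltb (l \in B b) (rc \in B b).
  by rewrite /ltr2 /Defs.rot !ffunE !inE rev_ordK.
have YBa : ltr2 (Defs.rot B l) (Defs.rot B rc) (rev_ord a) = ltb (l \in B a) (rc \in B a).
  by rewrite /ltr2 /Defs.rot !ffunE !inE rev_ordK.
have mYBb : (rev_ord b \in MYB) = fl1 (ltb (l \in B b) (rc \in B b)) (ltb (l \in B a) (rc \in B a)) tY.
  by rewrite /MYB eY (@mem_bfold_mid _ _ preY (rev_ord b) (rev_ord a) sufY (rev_ord b) false rab erefl bpY bsY) YBb YBa.
have mYBa : (rev_ord a \in MYB) = fl2 (ltb (l \in B b) (rc \in B b)) (ltb (l \in B a) (rc \in B a)) tY.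
  by rewrite /MYB eY (@mem_bfold_mid _ _ preY (rev_ord b) (rev_ord a) sufY (rev_ord a) true rab erefl apY asY) YBb YBa.
have mXBl : (l \in MXB) = fl1 (ltb (l \in B a) (l \in B b)) (ltb (rc \in B a) (rc \in B b)) tX.
  by rewrite /MXB eX (@mem_bfold_mid _ _ preX l rc sufX l false lr erefl lpX lsX).
have mXBr : (rc \in MXB) = fl2 (ltb (l \in B a) (l \in B b)) (ltb (rc \in B a) (rc \in B b)) tX.
  by rewrite /MXB eX (@mem_bfold_mid _ _ preX l rc sufX rc true lr erefl rpX rsX).
have XEl : ltr2 (E a) (E b) l = ltb ((l \in B a) || (rev_ord a \in MYB)) ((l \in B b) || (rev_ord b \in MYB)).
  by rewrite /ltr2 !hE eqxx.
have XEr : ltr2 (E a) (E b) rc = ltb ((rc \in B a) && (rev_ord a \notin MYB)) ((rc \in B b) && (rev_ord b \notin MYB)).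
  by rewrite /ltr2 !hE rl eqxx.
have YDb : ltr2 (Defs.rot D l) (Defs.rot D rc) (rev_ord b) = ltb ((l \in B b) && (l \notin MXB)) ((rc \in B b) && (rc \notin MXB)).
  by rewrite /ltr2 /Defs.rot !ffunE !inE rev_ordK !hD ba eqxx.
have YDa : ltr2 (Defs.rot D l) (Defs.rot D rc) (rev_ord a) = ltb ((l \in B a) || (l \in MXB)) ((rc \in B a) || (rc \in MXB)).
  by rewrite /ltr2 /Defs.rot !ffunE !inE rev_ordK !hD eqxx.
have mXEl : (l \in MXE) = fl1 (ltr2 (E a) (E b) l) (ltr2 (E a) (E b) rc) tX.
  by rewrite /MXE eX (@mem_bfold_mid _ _ preX l rc sufX l false lr erefl lpX lsX) tXe.
have mXEr : (rc \in MXE) = fl2 (ltr2 (E a) (E b) l) (ltr2 (E a) (E b) rc) tX.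
  by rewrite /MXE eX (@mem_bfold_mid _ _ preX l rc sufX rc true lr erefl rpX rsX) tXe.
have mYDb : (rev_ord b \in MYD) = fl1 (ltr2 (Defs.rot D l) (Defs.rot D rc) (rev_ord b)) (ltr2 (Defs.rot D l) (Defs.rot D rc) (rev_ord a)) tY.
  by rewrite /MYD eY (@mem_bfold_mid _ _ preY (rev_ord b) (rev_ord a) sufY (rev_ord b) false rab erefl bpY bsY) tYe.
have mYDa : (rev_ord a \in MYD) = fl2 (ltr2 (Defs.rot D l) (Defs.rot D rc) (rev_ord b)) (ltr2 (Defs.rot D l) (Defs.rot D rc) (rev_ord a)) tY.
  by rewrite /MYD eY (@mem_bfold_mid _ _ preY (rev_ord b) (rev_ord a) sufY (rev_ord a) true rab erefl apY asY) tYe.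
have [h1 [h2 [h3 [h4 [h5 h6]]]]] := finite (l \in B b) (rc \in B b) (l \in B a) (rc \in B a) tX tY.
rewrite -mYBb -mYBa -mXBl -mXBr in h1 h2 h3 h4 h5 h6.
have outX : forall c, c != l -> c != rc -> (c \in MXE) = (c \in MXB).
  move=> c cl cr; rewrite /MXE /MXB eX !mem_bfold_out ?inE ?negb_or ?cl ?cr //.
  have sX : {in sufX, ltr2 (E a) (E b) =1 ltr2 (B a) (B b)}.
    by move=> x xs; apply: agX; rewrite mem_cat xs orbT.
  have pX : {in preX, ltr2 (E a) (E b) =1 ltr2 (B a) (B b)}.
    by move=> x xs; apply: agX; rewrite mem_cat xs.
  by rewrite (bfold_eq _ sX) (bfold_eq _ pX) tXe XEl XEr h1.
have outY : forall r, r != a -> r != b -> (rev_ord r \in MYD) = (rev_ord r \in MYB).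
  move=> r ra rb.
  have rb' : rev_ord r != rev_ord b by apply: contra_neq rb => /rev_ord_inj.
  have ra' : rev_ord r != rev_ord a by apply: contra_neq ra => /rev_ord_inj.
  rewrite /MYD /MYB eY !mem_bfold_out ?inE ?negb_or ?rb' ?ra' //.
  have sY : {in sufY, ltr2 (Defs.rot D l) (Defs.rot D rc) =1 ltr2 (Defs.rot B l) (Defs.rot B rc)}.
    by move=> x xs; apply: agY; rewrite mem_cat xs orbT.
  have pY : {in preY, ltr2 (Defs.rot D l) (Defs.rot D rc) =1 ltr2 (Defs.rot B l) (Defs.rot B rc)}.
    by move=> x xs; apply: agY; rewrite mem_cat xs.
  by rewrite (bfold_eq _ sY) (bfold_eq _ pY) tYe YDb YDa h2 YBb YBa.
rewrite -XEl -XEr -YDb -YDa -mXEl -mXEr -mYDb -mYDa in h3 h4 h5 h6.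
apply/ffunP => r; apply/setP => c; rewrite hE2 hD2.
case: (eqVneq c l) => [->|cl].
  case: (eqVneq r a) => [->|ra]; first by rewrite hE hD !eqxx.
  case: (eqVneq r b) => [->|rb]; first by rewrite hE hD !eqxx ba.
  by rewrite hE hD (negPf ra) (negPf rb) eqxx outY.
case: (eqVneq c rc) => [->|cr].
  case: (eqVneq r a) => [->|ra]; first by rewrite hE hD !eqxx rl.
  case: (eqVneq r b) => [->|rb]; first by rewrite hE hD !eqxx ba rl.
  by rewrite hE hD (negPf ra) (negPf rb) eqxx rl outY.
case: (eqVneq r a) => [->|ra]; first by rewrite hE hD !eqxx ?(negPf cl) ?(negPf cr) outX.
case: (eqVneq r b) => [->|rb]; first by rewrite hE hD !eqxx ba ?(negPf cl) ?(negPf cr) outX.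
by rewrite hE hD (negPf ra) (negPf rb) ?(negPf cl) ?(negPf cr).
Qed.
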